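(* For every even integer $k\geq 2$ and every integer $d\geq 1$, there are infinitely many arithmetic progressions $\{a_1, a_2,\dots,a_k\}$ of positive integers of length $k$ and common difference $d$ such that $\sum_{i=1}^{k} \lambda(a_i)=0$, where $\lambda$ is the Liouville function.
   Context: The Liouville function is $\lambda(n)=(-1)^{\Omega(n)}$, where $\Omega(n)$ is the number of prime factors of $n$ counted with multiplicity. *)

(* Defs.v *)
From mathcomp Require Import all_boot all_order all_algebra.
Set Implicit Arguments. Unset Strict Implicit. Unset Printing Implicit Defensive.
Import GRing.Theory Num.Theory.

(* Big Omega: number of prime factors of n counted with multiplicity
   (Omega 0 is irrelevant here; it is 0 by this definition). *)
Definition bigOmega (n : nat) : nat := \sum_(p <- primes n) logn p n.

Definition liouville (n : nat) : int := ((-1) ^+ bigOmega n)%R.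

(* Main.v *)
Require Import Defs.
From mathcomp Require Import all_boot all_order all_algebra zify ring lra.
From Stdlib Require Classical_Prop.
Import Order.TTheory GRing.Theory Num.Theory.
Set Implicit Arguments. Unset Strict Implicit. Unset Printing Implicit Defensive.

Lemma bigOmegaE n B : (n < B)%N -> bigOmega n = \sum_(p < B) logn p n.
Proof.
move=> nB; rewrite /bigOmega -(big_mkord xpredT (fun p => logn p n)).
rewrite [RHS](bigID (fun p => p \in primes n)) /= [X in (_ + X)%N]big1 ?addn0; last first.
  by move=> p /negbTE; rewrite -logn_gt0 lt0n => /negbFE/eqP.
rewrite -[RHS]big_filter; apply: perm_big; apply: uniq_perm.
- exact: primes_uniq.
- by rewrite filter_uniq // iota_uniq.
move=> p; rewrite mem_filter mem_index_iota /=.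
case pP: (p \in primes n) => //=; move: pP; rewrite mem_primes => /and3P[_ n0 pn].
by rewrite (leq_ltn_trans (dvdn_leq n0 pn) nB).
Qed.

Lemma bigOmegaM a b : (0 < a)%N -> (0 < b)%N -> bigOmega (a * b) = (bigOmega a + bigOmega b)%N.
Proof.
move=> a0 b0; have B : (a * b < (a * b).+1)%N by [].
have Ba : (a < (a * b).+1)%N by rewrite ltnS leq_pmulr.
have Bb : (b < (a * b).+1)%N by rewrite ltnS leq_pmull.
rewrite (bigOmegaE B) (bigOmegaE Ba) (bigOmegaE Bb) -big_split /=.
by apply: eq_bigr => p _; rewrite lognM.
Qed.

Lemma perm_divp p m : prime p -> (0 < m)%N ->
  perm_eq [seq n <- divisors (p * m) | (p %| n)%N] [seq (p * e)%N | e <- divisors m].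
Proof.
move=> pp m0; have p0 := prime_gt0 pp; have pm0 : (0 < p * m)%N by rewrite muln_gt0 p0.
apply: uniq_perm.
- by rewrite filter_uniq // divisors_uniq.
- by rewrite map_inj_uniq ?divisors_uniq // => x y /eqP; rewrite eqn_pmul2l // => /eqP.
move=> n; rewrite mem_filter -dvdn_divisors //; apply/andP/mapP.
  move=> [pn nd]; exists (n %/ p); first by rewrite -dvdn_divisors // -(dvdn_pmul2l p0) [(p * _)%N]mulnC divnK.
  by rewrite mulnC divnK.
move=> [e ed ->]; rewrite -dvdn_divisors // in ed.
by rewrite dvdn_mulr // dvdn_pmul2l.
Qed.

Lemma perm_divnp p m : prime p -> (0 < m)%N ->
  perm_eq [seq n <- divisors (p * m) | ~~ (p %| n)%N] [seq n <- divisors m | ~~ (p %| n)%N].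
Proof.
move=> pp m0; have p0 := prime_gt0 pp; have pm0 : (0 < p * m)%N by rewrite muln_gt0 p0.
apply: uniq_perm; rewrite ?filter_uniq ?divisors_uniq //.
move=> n; rewrite !mem_filter -!dvdn_divisors //.
case pn: (p %| n)%N => //=.
have cnp : coprime n p by rewrite coprime_sym prime_coprime // pn.
by rewrite Gauss_dvdr.
Qed.

Local Open Scope ring_scope.

Lemma liouvilleM a b : (0 < a)%N -> (0 < b)%N -> liouville (a * b) = liouville a * liouville b.
Proof. by move=> a0 b0; rewrite /liouville bigOmegaM // exprD. Qed.

Lemma bigOmega_prime p : prime p -> bigOmega p = 1%N.
Proof. by move=> pp; rewrite /bigOmega primes_prime // big_cons big_nil logn_prime // eqxx. Qed.

Lemma liouville_prime p : prime p -> liouville p = -1.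
Proof. by move=> pp; rewrite /liouville bigOmega_prime. Qed.

Lemma liouville_pm n : liouville n = 1 \/ liouville n = -1.
Proof. rewrite /liouville -signr_odd; case: odd; [right|left]; by rewrite ?expr1 ?expr0. Qed.
Definition T m := \sum_(n <- divisors m) liouville n.

Lemma T_split m (P : pred nat) : T m = \sum_(n <- [seq n <- divisors m | P n]) liouville n
   + \sum_(n <- [seq n <- divisors m | ~~ P n]) liouville n.
Proof. by rewrite /T !big_filter (bigID P). Qed.

Lemma SP p m : prime p -> (0 < m)%N ->
  \sum_(n <- [seq n <- divisors (p * m) | (p %| n)%N]) liouville n = - T m.
Proof.
move=> pp m0; rewrite (perm_big _ (perm_divp pp m0)) big_map /T -sumrN.
rewrite big_seq [RHS]big_seq; apply: eq_bigr => e; rewrite -dvdn_divisors // => ed.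
by rewrite liouvilleM ?(prime_gt0 pp) ?(dvdn_gt0 m0 ed) // liouville_prime // mulN1r.
Qed.

Lemma T_pm p m : prime p -> (0 < m)%N ->
  T (p * m) = - \sum_(n <- [seq n <- divisors m | (p %| n)%N]) liouville n.
Proof.
move=> pp m0; rewrite (T_split _ (fun n => (p %| n)%N)) SP // (perm_big _ (perm_divnp pp m0)).
rewrite (T_split m (fun n => (p %| n)%N)); ring.
Qed.

Lemma T1 : T 1 = 1.
Proof. by rewrite /T (_ : divisors 1 = [:: 1%N]) // big_seq1 /liouville /bigOmega (_ : primes 1 = [::]) // big_nil expr0. Qed.

Lemma T_bound m : (0 < m)%N -> 0 <= T m <= 1.
Proof.
elim/ltn_ind: m => m IH m0.
case: (ltngtP m 1) => [|m1|->]; first by rewrite ltnNge m0.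
  2: by rewrite T1.
have pp := pdiv_prime m1; set p := pdiv m in pp *.
have p1 := prime_gt1 pp; have p0 := prime_gt0 pp.
have em : m = (p * (m %/ p))%N by rewrite mulnC divnK // pdiv_dvd.
have m'0 : (0 < m %/ p)%N by rewrite divn_gt0 // dvdn_leq // pdiv_dvd.
rewrite em T_pm //.
case pm': (p %| m %/ p)%N.
  have em' : (m %/ p = p * (m %/ p %/ p))%N by rewrite mulnC divnK.
  have m''0 : (0 < m %/ p %/ p)%N by rewrite divn_gt0 // dvdn_leq.
  rewrite em' SP // opprK; apply: IH => //.
  apply: (leq_ltn_trans (leq_div _ _)); exact: ltn_Pdiv.
rewrite big_seq_cond big1 ?oppr0 ?lexx ?ler01 //.
move=> n /andP[]; rewrite mem_filter -dvdn_divisors // => /andP[pn nd] _.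
by move: pm'; rewrite (dvdn_trans pn nd).
Qed.

Definition H (f : nat -> int) x := \sum_(1 <= n < x.+1) f n *+ (x %/ n).
Definition Lf (f : nat -> int) y := \sum_(1 <= n < y.+1) f n.

Lemma T_iota m : (0 < m)%N -> T m = \sum_(1 <= n < m.+1 | (n %| m)%N) liouville n.
Proof.
move=> m0; rewrite /T -[RHS]big_filter; apply: perm_big; apply: uniq_perm.
- exact: divisors_uniq.
- by rewrite filter_uniq // iota_uniq.
move=> n; rewrite mem_filter mem_index_iota -dvdn_divisors //.
case nm: (n %| m)%N => //=.
by rewrite (dvdn_gt0 m0 nm) ltnS dvdn_leq.
Qed.

Lemma H_T x : H liouville x = \sum_(1 <= m < x.+1) T m.
Proof.
elim: x => [|x IH]; first by rewrite /H !big_geq.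
rewrite /H.
have -> : \sum_(1 <= n < x.+2) liouville n *+ (x.+1 %/ n)
   = \sum_(1 <= n < x.+2) liouville n *+ (n %| x.+1)%N + \sum_(1 <= n < x.+2) liouville n *+ (x %/ n).
  rewrite -big_split /=; apply: eq_big_nat => n /andP[n1 _].
  by rewrite divnS // mulrnDr.
rewrite [X in _ + X]big_nat_recr //= divn_small // mulr0n addr0 -/(H liouville x) IH.
rewrite [RHS]big_nat_recr //= addrC; congr (_ + _).
by rewrite T_iota // [RHS]big_mkcond; apply: eq_bigr => n _; rewrite mulrb.
Qed.

Lemma H_le x : H liouville x <= x%:Z.
Proof.
rewrite H_T; apply: (le_trans (y := \sum_(1 <= m < x.+1) (1 : int))).
  apply: ler_sum_nat => m /andP[m1 _]; by case/andP: (T_bound m1).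
by rewrite sumr_const_nat subn1 /= natz.
Qed.

Lemma H_ge x : 0 <= H liouville x.
Proof.
rewrite H_T big_nat_cond; apply: sumr_ge0 => m /andP[/andP[m1 _] _]; by case/andP: (T_bound m1).
Qed.

Lemma sum_shift (F : nat -> int) a k : \sum_(a <= n < a + k) F n = \sum_(i < k) F (a + i)%N.
Proof.
elim: k => [|k IH]; first by rewrite addn0 big_geq // big_ord0.
by rewrite addnS big_nat_recr ?leq_addr //= IH big_ord_recr.
Qed.

Lemma sum_cond (c : nat -> int) d x : (0 < d)%N ->
  \sum_(1 <= j < x.+1) (if (j * d <= x)%N then c j else 0) = \sum_(1 <= j < (x %/ d).+1) c j.
Proof.
move=> d0; rewrite [RHS](big_nat_widen _ _ _ _ _ (_ : (x %/ d).+1 <= x.+1)%N) ?ltnS ?leq_div //.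
rewrite -big_mkcond /=; apply: eq_bigl => j; by rewrite -[RHS]/(j <= x %/ d)%N leq_divRL.
Qed.

Lemma H_L f x : H f x = \sum_(1 <= j < x.+1) Lf f (x %/ j).
Proof.
rewrite /H.
transitivity (\sum_(1 <= n < x.+1) \sum_(1 <= j < x.+1) (if (j * n <= x)%N then f n else 0)).
  apply: eq_big_nat => n /andP[n1 _]; by rewrite (sum_cond (fun _ => f n)) // sumr_const_nat subn1.
rewrite exchange_big_nat /=; apply: eq_big_nat => j /andP[j1 _].
rewrite /Lf -(sum_cond f _ j1); apply: eq_big_nat => n _; by rewrite mulnC.
Qed.

Definition D x := (\sum_(1 <= j < x.+1) x %/ j)%N.

Lemma D2 x : (2 * D x + x <= D (2 * x))%N.
Proof.
rewrite /D [X in (_ <= X)%N](big_cat_nat _ (n := x.+1)) //=; last by lia.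
rewrite mulnC big_distrl /= leq_add //.
  apply: leq_sum => j _; case: (posnP j) => [->|j0]; first by rewrite !divn0.
  by rewrite leq_divRL // mulnAC [(2 * x)%N]mulnC leq_mul2r leq_divM orbT.
apply: (leq_trans (n := \sum_(x.+1 <= j < (2*x).+1) 1)%N).
  by rewrite sum_nat_const_nat subSS muln1 mul2n -addnn addnK.
rewrite big_nat_cond [X in (_ <= X)%N]big_nat_cond; apply: leq_sum => j /andP[/andP[j1 j2] _].
by rewrite divn_gt0 ?(leq_trans _ j1) // -ltnS.
Qed.

Lemma Dpow t : ((t.+1) * 2 ^ t <= 2 * D (2 ^ t))%N.
Proof.
elim: t => [|t IH]; first by rewrite /D big_nat1.
have := D2 (2 ^ t); rewrite expnS; set P := (2 ^ t)%N in IH *; lia.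
Qed.

Lemma no_bias f k M : (0 < k)%N -> (forall n, -1 <= f n <= 1) -> (forall x, H f x <= x%:Z) ->
  (forall m, (M <= m)%N -> 1 <= \sum_(i < k) f (m + i)%N) -> False.
Proof.
move=> k0 fb Hb Wb.
pose C := ((k.+1) * (M + k))%N.
have Lge : forall y, - (y%:Z) <= Lf f y.
  move=> y; rewrite /Lf; apply: (le_trans (y := \sum_(1 <= n < y.+1) (-1 : int))).
    by rewrite sumr_const_nat subn1 /= mulNrn -[1 *+ y]/(y%:R) natz.
  apply: ler_sum_nat => n _; by case/andP: (fb n).
have LA : forall y, y%:Z - C%:Z <= k%:Z * Lf f y.
  elim/ltn_ind => y IH.
  case: (ltnP y (M + k)) => hy.
    have h1 := ler_wpM2l (ler0n _ k) (Lge y).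
    have h2 : (y * k.+1 <= C)%N by rewrite /C mulnC leq_mul2l ltnW.
    move: h1 h2; rewrite mulrN; lia.
  have ey : y = (y - k + k)%N by rewrite subnK // (leq_trans (leq_addl M k) hy).
  have Lrec : Lf f y = Lf f (y - k) + \sum_(i < k) f ((y - k).+1 + i)%N.
    rewrite /Lf {1}ey -addSn (big_cat_nat _ (n := (y - k).+1)) ?sum_shift //; lia.
  have W1 := Wb (y - k).+1 (ltac:(lia)).
  have IHz := IH (y - k)%N (ltac:(lia)).
  have h := ler_wpM2l (ler0n _ k) W1.
  move: IHz h; rewrite Lrec mulrDr mulr1; lia.
have HD : forall x, ((D x)%:Z - (C * x)%:Z <= k%:Z * H f x).
  move=> x; rewrite H_L mulr_sumr /D.
  apply: (le_trans (y := \sum_(1 <= j < x.+1) ((x %/ j)%:Z - C%:Z))).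
    rewrite sumrB sumr_const_nat subn1 /= -mulr_natr natz -PoszM.
    by rewrite -(big_morph Posz PoszD (erefl (Posz 0))).
  by apply: ler_sum_nat => j _; apply: LA.
pose t := (2 * (C + k))%N.
have h1 := Dpow t.
have h2 := HD (2 ^ t)%N.
have h3 := ler_wpM2l (ler0n _ k) (Hb (2 ^ t)%N).
have h4 : (D (2 ^ t) <= (C + k) * 2 ^ t)%N.
  move: h2 h3; lia.
move: h1 h4; rewrite /t; set P := (2 ^ _)%N; nia.
Qed.

Lemma even_sum (g : nat -> int) h : (forall i, g i = 1 \/ g i = -1) ->
  exists z, \sum_(i < 2 * h) g i = 2 * z.
Proof.
move=> gb; elim: h => [|h [z Hz]]; first by exists 0; rewrite muln0 big_ord0 mulr0.
rewrite mulnS addSn add1n !big_ord_recr /= Hz.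
case: (gb (2 * h)%N) => ->; case: (gb (2 * h).+1) => ->.
- by exists (z + 1); lia.
- by exists z; lia.
- by exists z; lia.
- by exists (z - 1); lia.
Qed.

Lemma shift_sum (g : nat -> int) k :
  \sum_(i < k) g i.+1 = \sum_(i < k) g i - g 0%N + g k.
Proof.
have E1 : \sum_(i < k.+1) g i = g 0%N + \sum_(i < k) g (bump 0 i) by rewrite big_ord_recl.
have E2 : \sum_(i < k.+1) g i = \sum_(i < k) g i + g k by rewrite big_ord_recr.
have -> : \sum_(i < k) g i.+1 = \sum_(i < k) g (bump 0 i) by [].
move: E1 E2; lia.
Qed.

Lemma sign_const (V : nat -> int) M : (forall m, (M <= m)%N -> V m != 0) ->
  (forall m, exists z, V m = 2 * z) -> (forall m, V m.+1 - V m <= 2 /\ V m - V m.+1 <= 2) ->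
  (forall m, (M <= m)%N -> 0 < V m) \/ (forall m, (M <= m)%N -> V m < 0).
Proof.
move=> nz ev st.
case h: (0 < V M); [left|right] => m Mm; rewrite -(subnKC Mm); elim: (m - M)%N => [|j IH].
- by rewrite addn0.
- have := nz (M + j.+1)%N (leq_addr _ _); have [z1 e1] := ev (M + j)%N;
  have [z2 e2] := ev (M + j.+1)%N; have := st (M + j)%N; rewrite addnS.
  rewrite addnS in e2; move: IH; lia.
- have := nz M (leqnn M); move: h; rewrite addn0; lia.
- have := nz (M + j.+1)%N (leq_addr _ _); have [z1 e1] := ev (M + j)%N;
  have [z2 e2] := ev (M + j.+1)%N; have := st (M + j)%N; rewrite addnS.
  rewrite addnS in e2; move: IH; lia.
Qed.

Lemma step_aux (S a b : int) : (a = 1 \/ a = -1) -> (b = 1 \/ b = -1) ->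
  S - a + b - S <= 2 /\ S - (S - a + b) <= 2.
Proof. by case=> ->; case=> ->; lia. Qed.

Theorem corollary5p2 (k d : nat) :
  ~~ odd k -> (2 <= k)%N -> (1 <= d)%N ->
  forall N : nat, exists a : nat, (N < a)%N /\ (0 < a)%N /\
    (\sum_(i < k) liouville (a + i * d) = 0)%R.
Proof.
move=> ke k2 d1 N.
have k0 : (0 < k)%N by apply: leq_trans k2.
pose W m := \sum_(i < k) liouville (m + i)%N.
have Sd : forall m, (0 < m)%N -> \sum_(i < k) liouville (d * m + i * d)%N = liouville d * W m.
  move=> m m0; rewrite /W mulr_sumr; apply: eq_bigr => i _; rewrite -liouvilleM ?addn_gt0 ?m0 //.
  by congr liouville; rewrite mulnDr [(i * d)%N]mulnC.
case: (Classical_Prop.classic (exists m, (N < m)%N /\ W m = 0)) => [[m [Nm Wm]]|nW].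
  have m0 : (0 < m)%N by apply: leq_ltn_trans Nm.
  exists (d * m)%N; split; first by apply: (leq_trans Nm); rewrite leq_pmull.
  by split; [rewrite muln_gt0 d1 | rewrite Sd // Wm mulr0].
exfalso.
have ek : k = (2 * k./2)%N by rewrite mul2n even_halfK.
have ev : forall m, exists z, W m = 2 * z.
  move=> m; rewrite /W ek; exact: (@even_sum (fun i => liouville (m + i)%N) k./2 (fun i => liouville_pm _)).
have st : forall m, W m.+1 - W m <= 2 /\ W m - W m.+1 <= 2.
  move=> m; have := shift_sum (fun i => liouville (m + i)%N) k.
  rewrite /W /=. under eq_bigr do rewrite addnS -addSn.
  rewrite addn0 => ->.
  exact: step_aux (liouville_pm _) (liouville_pm _).
have nz : forall m, (N.+1 <= m)%N -> W m != 0.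
  by move=> m Nm; apply/eqP => Wm; apply: nW; exists m.
case: (sign_const nz ev st) => Hs.
- apply: (no_bias (f := liouville) (M := N.+1) k0).
  + by move=> n; case: (liouville_pm n) => ->.
  + exact: H_le.
  + by move=> m Nm; rewrite -gtz0_ge1; exact: Hs.
- apply: (no_bias (f := fun n => - liouville n) (M := N.+1) k0).
  + by move=> n; case: (liouville_pm n) => ->.
  + move=> x; have := H_ge x; rewrite /H.
    move=> h; under eq_bigr do rewrite mulNrn.
    rewrite sumrN; apply: (le_trans (y := 0)); last by [].
    by rewrite oppr_le0.
  + by move=> m Nm; rewrite sumrN -gtz0_ge1 oppr_gt0; exact: Hs.
Qed.
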